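(* Let $P$ be a rooted forest on $[n]$ with natural labeling, and for $1\le i\le n$ define $\hat\partial_i$ on $\mathcal{L}(P)$ by $\pi\hat\partial_i=\pi\partial_{\pi^{-1}_i}$. Then for $\pi\in\mathcal{L}(P)$, $\pi\hat\partial_i$ is the linear extension obtained from $\pi$ by moving the letter $i$ to position $n$ and reordering the letters $j\succeq i$ (which form a chain) among the positions they then occupy so that the result is a linear extension of $P$.
   Context: A rooted forest is a disjoint union of rooted trees, a rooted tree being a connected finite poset in which each element is covered by at most one element. $\mathcal{L}(P)=\{\pi\in S_n : i\prec j \Rightarrow \pi^{-1}_i<\pi^{-1}_j\}$ in one-line notation $\pi=\pi_1\cdots\pi_n$. $\pi\tau_i$ ($1\le i<n$) swaps $\pi_i,\pi_{i+1}$ if they are incomparable and is $\pi$ otherwise; operators act on the right; $\partial_j=\tau_j\tau_{j+1}\cdots\tau_{n-1}$. *)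

(* Defs.v *)
(* Permutations of [n] = {1,...,n} in one-line notation are
   sequences of nats (positions 1..n correspond to list indices 0..n-1). *)
From mathcomp Require Import all_boot.
Set Implicit Arguments. Unset Strict Implicit. Unset Printing Implicit Defensive.

Definition inN (n x : nat) : bool := (1 <= x <= n).

Definition is_poset (n : nat) (le : rel nat) : Prop :=
  [/\ forall x, inN n x -> le x x,
      forall x y, inN n x -> inN n y -> le x y -> le y x -> x = y &
      forall x y z, inN n x -> inN n y -> inN n z -> le x y -> le y z -> le x z].

Definition ltP (le : rel nat) (x y : nat) : bool := (x != y) && le x y.

Definition covers (n : nat) (le : rel nat) (x y : nat) : bool :=
  ltP le x y && ~~ has (fun z => ltP le x z && ltP le z y) (iota 1 n).

(* rooted forest: a finite poset in which every element is covered by at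
   most one element (its connected components are then rooted trees) *)
Definition rooted_forest (n : nat) (le : rel nat) : Prop :=
  is_poset n le /\
  forall x y1 y2, inN n x -> inN n y1 -> inN n y2 ->
    covers n le x y1 -> covers n le x y2 -> y1 = y2.

Definition natural_labeling (n : nat) (le : rel nat) : Prop :=
  forall i j, inN n i -> inN n j -> ltP le i j -> i < j.

Definition is_perm (n : nat) (pi : seq nat) : Prop := perm_eq pi (iota 1 n).

Definition linext (n : nat) (le : rel nat) (pi : seq nat) : Prop :=
  is_perm n pi /\
  forall i j, inN n i -> inN n j -> ltP le i j -> index i pi < index j pi.

Definition incomparable (le : rel nat) (a b : nat) : bool :=
  ~~ le a b && ~~ le b a.

(* swap the entries at (0-based) list indices k and k+1 *)
Definition swap_at (s : seq nat) (k : nat) : seq nat :=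
  [seq nth 0 s (if j == k then k.+1 else if j == k.+1 then k else j)
  | j <- iota 0 (size s)].

(* pi tau_i (1 <= i < n): swap pi_i, pi_{i+1} if incomparable *)
Definition tau (le : rel nat) (pi : seq nat) (i : nat) : seq nat :=
  if incomparable le (nth 0 pi i.-1) (nth 0 pi i) then swap_at pi i.-1 else pi.

(* pi partial_j = pi tau_j tau_{j+1} ... tau_{n-1} (operators act on the right) *)
Definition partial (n : nat) (le : rel nat) (pi : seq nat) (j : nat) : seq nat :=
  foldl (tau le) pi (iota j (n - j)).

(* pi hatpartial_i = pi partial_{pi^{-1}_i}, with pi^{-1}_i the 1-based position of i *)
Definition hat_partial (n : nat) (le : rel nat) (pi : seq nat) (i : nat) : seq nat :=
  partial n le pi (index i pi).+1.

(* Main.v *)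
Require Import Defs.
From mathcomp Require Import all_boot.
From mathcomp Require Import zify.
Set Implicit Arguments. Unset Strict Implicit. Unset Printing Implicit Defensive.

Lemma nth_rem_gen (x : nat) (s : seq nat) k :
  nth 0 (rem x s) k = if k < index x s then nth 0 s k else nth 0 s k.+1.
Proof.
elim: s k => [|y s IH] k /=; first by case: k.
case: eqP => [->|neq] /=; first by [].
case: k => [|k] //=; rewrite IH; by case: ifP.
Qed.

Lemma size_swap s k : size (swap_at s k) = size s.
Proof. by rewrite /swap_at size_map size_iota. Qed.

Lemma nth_swap s k j : j < size s ->
  nth 0 (swap_at s k) j = nth 0 s (if j == k then k.+1 else if j == k.+1 then k else j).
Proof. by move=> hj; rewrite /swap_at (nth_map 0) ?size_iota // nth_iota. Qed.

Lemma fK k x : (let f := fun j => if j == k then k.+1 else if j == k.+1 then k else j in f (f x)) = x.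
Proof.
have h1 : (k.+1 == k) = false by apply/eqP; lia.
have h2 : (k == k.+1) = false by apply/eqP; lia.
rewrite /=; case: (eqVneq x k) => [->|n1]; first by rewrite ?(eqxx, h1, h2).
case: (eqVneq x k.+1) => [->|n2]; first by rewrite ?(eqxx, h1, h2).
by rewrite ?(negbTE n1, negbTE n2).
Qed.

Lemma perm_swap s k : k.+1 < size s -> perm_eq (swap_at s k) s.
Proof.
move=> hk.
set f := fun j => if j == k then k.+1 else if j == k.+1 then k else j.
have -> : swap_at s k = map (nth 0 s) (map f (iota 0 (size s))) by rewrite /swap_at -map_comp.
have e := mkseq_nth 0 s; rewrite /mkseq in e.
apply: (@perm_trans _ (map (nth 0 s) (iota 0 (size s)))); last by rewrite e.
apply: perm_map.
apply: uniq_perm; [|exact: iota_uniq|].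
- rewrite map_inj_in_uniq ?iota_uniq // => a b _ _; rewrite /f;
  repeat case: eqP => ?; lia.
- move=> x; rewrite mem_iota; apply/mapP/idP => [[y]|hx].
    by rewrite mem_iota /f => hy ->; repeat case: eqP => ?; lia.
  exists (f x); first by rewrite mem_iota /f; repeat case: eqP => ?; lia.
  symmetry; exact: (fK k x).
Qed.

Definition LE n le (s : seq nat) := perm_eq s (iota 1 n) /\
  forall u v, u < n -> v < n -> Defs.ltP le (nth 0 s u) (nth 0 s v) -> u < v.

Lemma perm_inN n (s : seq nat) x : perm_eq s (iota 1 n) -> x \in s -> inN n x.
Proof. by move=> hp; rewrite (perm_mem hp) mem_iota /inN; lia. Qed.

Lemma LE_swap n le s k : LE n le s -> k.+1 < n ->
  incomparable le (nth 0 s k) (nth 0 s k.+1) -> LE n le (swap_at s k).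
Proof.
move=> [hp ho] hk hinc; have hs : size s = n by rewrite (perm_size hp) size_iota.
split; first by apply: perm_trans (perm_swap _) hp; rewrite hs.
move=> u v hu hv; rewrite !nth_swap ?hs // => hlt.
case: (boolP ((u == k.+1) && (v == k))) => [/andP[/eqP eu /eqP ev]|hne].
  subst u v; have e1 : (k.+1 == k) = false by apply/eqP; lia.
  rewrite e1 !eqxx in hlt.
  move/andP: hinc=>[h1 _]; move/andP: hlt => [_ h2]; by rewrite h2 in h1.
move: hlt; set fu := (if u == k then _ else _); set fv := (if v == k then _ else _) => hlt.
have hfu : fu < n by rewrite /fu; repeat case: eqP => ?; lia.
have hfv : fv < n by rewrite /fv; repeat case: eqP => ?; lia.
move: (ho _ _ hfu hfv hlt) hne; rewrite /fu /fv; repeat case: eqP => ?; lia.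
Qed.

Lemma linext_LE n le s : linext n le s -> LE n le s.
Proof.
move=> [hp ho]; have hs : size s = n by rewrite (perm_size hp) size_iota.
have hu : uniq s by rewrite (perm_uniq hp) iota_uniq.
split => // u v hu' hv' hl.
have mu : nth 0 s u \in s by apply: mem_nth; rewrite hs.
have mv : nth 0 s v \in s by apply: mem_nth; rewrite hs.
have := ho _ _ (perm_inN hp mu) (perm_inN hp mv) hl.
by rewrite !index_uniq ?hs.
Qed.

Lemma LE_linext n le s : LE n le s -> linext n le s.
Proof.
move=> [hp ho]; have hs : size s = n by rewrite (perm_size hp) size_iota.
split => // x y hx hy hl.
have mx : x \in s by rewrite (perm_mem hp) mem_iota; move: hx; rewrite /inN; lia.
have my : y \in s by rewrite (perm_mem hp) mem_iota; move: hy; rewrite /inN; lia.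
apply: ho; rewrite -?hs ?index_mem ?nth_index //.
Qed.
Section Chain.
Variables (n : nat) (le : rel nat).
Hypothesis Hpo : is_poset n le.
Hypothesis Hlab : natural_labeling n le.
Hypothesis Hcov : forall x y1 y2, inN n x -> inN n y1 -> inN n y2 ->
    covers n le x y1 -> covers n le x y2 -> y1 = y2.

Lemma cover_ex x y : inN n x -> inN n y -> Defs.ltP le x y ->
  exists2 c, inN n c & covers n le x c && le c y.
Proof.
move=> hx hy hxy; case: Hpo => hr _ htr.
have hex : exists z, inN n z && Defs.ltP le x z && le z y by exists y; rewrite hy hxy hr.
case: (ex_minnP hex) => c /andP[/andP[hc hxc] hcy] hmin.
exists c => //; rewrite hcy andbT /covers hxc /=.
apply/hasPn => z; rewrite mem_iota => hz; apply/negP => /andP[hxz hzc].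
have hzn : inN n z by rewrite /inN; lia.
have hzc' := Hlab hzn hc hzc.
have : c <= z.
  apply: hmin; rewrite hzn hxz /=.
  case/andP: hzc => _ hzc; exact: htr hzc hcy.
lia.
Qed.

Lemma chain_step x j1 j2 : inN n x -> inN n j1 -> inN n j2 -> le x j1 -> le x j2 ->
  (le j1 j2 || le j2 j1) \/ exists c, [/\ inN n c, x < c, le c j1 & le c j2].
Proof.
move=> hx h1 h2 l1 l2.
case: (eqVneq x j1) => [<-|n1]; first by left; rewrite l2.
case: (eqVneq x j2) => [<-|n2]; first by left; rewrite l1 orbT.
have lt1 : Defs.ltP le x j1 by rewrite /Defs.ltP n1 l1.
have lt2 : Defs.ltP le x j2 by rewrite /Defs.ltP n2 l2.
have [c1 hc1 /andP[hcv1 hcy1]] := cover_ex hx h1 lt1.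
have [c2 hc2 /andP[hcv2 hcy2]] := cover_ex hx h2 lt2.
have e := Hcov hx hc1 hc2 hcv1 hcv2; subst c2.
right; exists c1; split => //.
by apply: Hlab => //; case/andP: hcv1.
Qed.

Lemma chain_up m : forall x j1 j2, n - x <= m -> inN n x -> inN n j1 -> inN n j2 ->
  le x j1 -> le x j2 -> le j1 j2 || le j2 j1.
Proof.
elim: m => [|m IH] x j1 j2 hm hx h1 h2 l1 l2.
  case: (chain_step hx h1 h2 l1 l2) => [//|[c [hc hxc hc1 hc2]]].
  by move: hc hx; rewrite /inN; lia.
case: (chain_step hx h1 h2 l1 l2) => [//|[c [hc hxc hc1 hc2]]].
apply: (IH c) => //; move: hc hx; rewrite /inN; lia.
Qed.
End Chain.

Section Main.
Variables (n : nat) (le : rel nat).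
Hypothesis Hpo : is_poset n le.
Variables (pi : seq nat) (i : nat).
Hypothesis Hpi : LE n le pi.
Hypothesis Hi : inN n i.

Local Notation s := (rcons (rem i pi) i).

Definition Inv q (sg : seq nat) :=
  [/\ LE n le sg, index i pi <= q /\ q < n,
   (forall k, k < q -> if le i (nth 0 s k) then le i (nth 0 sg k) else nth 0 sg k == nth 0 s k),
   le i (nth 0 sg q) &
   (forall k, q < k -> k < n -> nth 0 sg k = nth 0 pi k)].

Lemma pi_size : size pi = n.
Proof. by case: Hpi => hp _; rewrite (perm_size hp) size_iota. Qed.

Lemma i_in : i \in pi.
Proof. by case: Hpi => hp _; rewrite (perm_mem hp) mem_iota; move: Hi; rewrite /inN; lia. Qed.

Lemma nth_s k : k < n.-1 -> nth 0 s k = if k < index i pi then nth 0 pi k else nth 0 pi k.+1.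
Proof. by move=> hk; rewrite nth_rcons size_rem ?i_in // pi_size hk nth_rem_gen. Qed.

Lemma inv_init : Inv (index i pi) pi.
Proof.
have hidx : index i pi < n by rewrite -pi_size index_mem i_in.
split => //.
- move=> k hk; rewrite nth_s; last by lia.
  rewrite hk; by case: ifP.
- by rewrite nth_index ?i_in //; case: Hpo => hr _ _; exact: hr.
Qed.

Lemma inv_step q sg : Inv q sg -> q.+1 < n -> Inv q.+1 (tau le sg q.+1).
Proof.
case=> [[hp ho] [hiq hqn] hrel hc hrest] hq1.
have hs : size sg = n by rewrite (perm_size hp) size_iota.
have hu : uniq sg by rewrite (perm_uniq hp) iota_uniq.
have hd : nth 0 sg q.+1 = nth 0 pi q.+1 by apply: hrest.
have hsq : nth 0 s q = nth 0 pi q.+1.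
  by rewrite nth_s; [rewrite ltnNge hiq | lia].
have inq : inN n (nth 0 sg q) by apply: (perm_inN hp); rewrite mem_nth ?hs.
have inq1 : inN n (nth 0 sg q.+1) by apply: (perm_inN hp); rewrite mem_nth ?hs.
have e1 : (q.+1 == q) = false by apply/eqP; lia.
rewrite /tau /=; case: ifP => hinc.
- split.
  + exact: LE_swap.
  + split; lia.
  + move=> k hk; rewrite nth_swap ?hs; last by lia.
    case: (ltngtP k q) => hkq; last 1 first.
    * subst k; rewrite hsq -hd; by case: ifP.
    * have e2 : (k == q) = false by apply/eqP; lia.
      have e3 : (k == q.+1) = false by apply/eqP; lia.
      rewrite ?e2 ?e3; exact: hrel.
    * lia.
  + by rewrite nth_swap ?hs // e1 eqxx.
  + move=> k hk hkn; rewrite nth_swap ?hs //.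
    have -> : (k == q) = false by apply/eqP; lia.
    have -> : (k == q.+1) = false by apply/eqP; lia.
    apply: hrest; lia.
- have hid : le i (nth 0 sg q.+1).
    apply/negPn/negP => hnd.
    move/negbT: hinc; rewrite /incomparable negb_and !negbK; case/orP => h.
    + case: Hpo => _ _ htr; by rewrite (htr _ _ _ Hi inq inq1 hc h) in hnd.
    + have hne : nth 0 sg q.+1 != nth 0 sg q by rewrite nth_uniq ?hs // e1.
      have := ho q.+1 q hq1 hqn; rewrite /Defs.ltP hne h => /(_ isT); lia.
  split => //; first (split; lia).
  + move=> k hk; case: (ltngtP k q) => hkq; [exact: hrel| lia |].
    by subst k; rewrite hsq -hd hid.
  + move=> k hk hkn; apply: hrest; lia.
Qed.

Lemma inv_fold q sg : Inv q sg -> Inv n.-1 (foldl (tau le) sg (iota q.+1 (n - q.+1))).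
Proof.
move eqm: (n - q.+1) => m; elim: m q sg eqm => [|m IH] q sg eqm h /=.
  case: (h) => _ [_ hqn] _ _ _; have -> : n.-1 = q by lia. done.
case: (h) => _ [_ hqn] _ _ _.
apply: IH; first by lia.
apply: inv_step => //; lia.
Qed.
End Main.

Theorem lemma6p5 (n : nat) (le : rel nat) :
  rooted_forest n le -> natural_labeling n le ->
  forall (pi : seq nat) (i : nat), linext n le pi -> inN n i ->
  let rho := hat_partial n le pi i in
  let s := rcons (rem i pi) i in
  (forall j1 j2, inN n j1 -> inN n j2 -> le i j1 -> le i j2 ->
      le j1 j2 || le j2 j1) /\
  linext n le rho /\
  (forall k, k < n ->
     if le i (nth 0 s k) then le i (nth 0 rho k) else nth 0 rho k == nth 0 s k).
Proof.
move=> [Hpo Hcov] Hlab pi i Hlin Hi rho s.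
have HLE := linext_LE Hlin.
split.
  move=> j1 j2 h1 h2 l1 l2; apply: (chain_up Hpo Hlab Hcov (m := n) (x := i)) => //; lia.
have := inv_fold Hpo HLE Hi (inv_init Hpo HLE Hi).
rewrite -/(partial n le pi (index i pi).+1) -/(hat_partial n le pi i) -/rho.
case=> hLE _ hrel hc _.
split; first exact: LE_linext.
move=> k hk; case: (ltnP k n.-1) => hk'; first exact: hrel.
have ek : k = n.-1 by lia.
have hin := i_in HLE Hi.
subst k; rewrite /s nth_rcons size_rem // (pi_size HLE).
have -> : (n.-1 < n.-1) = false by apply/negbTE; rewrite -leqNgt.
rewrite eqxx; case: Hpo => hr _ _; by rewrite hr.
Qed.
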